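(* Let $G=(V,E)$ be a graph, let $V_{cover}\subseteq V$ be a vertex cover of $G$, and let $G'$ be a core subgraph of $G$ formed using $V_{cover}$. If $M'$ is a $(1+\epsilon)$-MCM in $G'$, then $M'$ is also a $(1+\epsilon)$-MCM in $G$.
   Context: A vertex cover is a set of vertices containing at least one endpoint of every edge. Given $G$ and a vertex cover $V_{cover}$, a core subgraph $G'$ consists of: all edges of $G$ with both endpoints in $V_{cover}$; and, for each $v\in V_{cover}$, $|V_{cover}|+1$ edges from $v$ to vertices in $V\setminus V_{cover}$ (all such edges if $v$ has fewer), chosen arbitrarily in an unweighted graph (and of maximum weight in a weighted graph). A matching $M$ of a graph $H$ is a $(1+\epsilon)$-MCM if $|M|\ge\frac{1}{1+\epsilon}$ times the size of a maximum cardinality matching of $H$. *)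

(* Defs.v *)
From HB Require Import structures.
From mathcomp Require Import all_boot all_order all_algebra.
Set Implicit Arguments. Unset Strict Implicit. Unset Printing Implicit Defensive.
Import Order.TTheory GRing.Theory Num.Theory.

Section Graphs.
Variable V : finType.

Definition is_graph (E : {set {set V}}) : Prop :=
  forall e, e \in E -> #|e| = 2.

Definition is_vertex_cover (E : {set {set V}}) (C : {set V}) : Prop :=
  forall e, e \in E -> exists2 v, v \in e & v \in C.

Definition is_matching (E : {set {set V}}) (M : {set {set V}}) : Prop :=
  M \subset E /\
  forall e1 e2, e1 \in M -> e2 \in M -> e1 != e2 -> [disjoint e1 & e2].

Definition is_matchingb (E M : {set {set V}}) : bool :=
  (M \subset E) &&
  [forall e1 in M, forall e2 in M, (e1 != e2) ==> [disjoint e1 & e2]].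

Definition mcm_size (E : {set {set V}}) : nat :=
  \max_(M : {set {set V}} | is_matchingb E M) #|M|.

Definition out_edges (E : {set {set V}}) (C : {set V}) (v : V) : {set {set V}} :=
  [set e in E | (v \in e) && ~~ (e \subset C)].

Definition is_core_subgraph (E : {set {set V}}) (C : {set V})
    (E' : {set {set V}}) : Prop :=
  [/\ E' \subset E,
      (forall e, e \in E -> e \subset C -> e \in E'),
      (forall e, e \in E' -> (e \subset C) \/
                  exists2 v, v \in C & e \in out_edges E C v) &
      (forall v, v \in C ->
         #|out_edges E' C v| = minn #|C|.+1 #|out_edges E C v|)].

Definition is_approx_mcm (R : realFieldType) (eps : R)
    (E M : {set {set V}}) : Prop :=
  is_matching E M /\
  ((mcm_size E)%:R / (1 + eps) <= (#|M|%:R : R))%R.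

End Graphs.

(* Main.v *)
Require Import Defs.
From mathcomp Require Import all_boot all_order all_algebra zify.
Import Order.TTheory GRing.Theory Num.Theory.
Set Implicit Arguments. Unset Strict Implicit.

Lemma card_rel (T U : finType) (A : {set T}) (B : {set U}) (r : T -> U -> bool) :
 (forall f, f \in A -> exists2 g, g \in B & r f g) ->
 (forall f f' g, f \in A -> f' \in A -> g \in B -> r f g -> r f' g -> f = f') ->
 #|A| <= #|B|.
Proof.
move=> ex inj; case: (set_0Vmem B) => [B0|[g0 g0B]].
  case: (set_0Vmem A) => [->|[f fA]]; first by rewrite cards0.
  by have [g]:= ex f fA; rewrite B0 inE.
pose h f := odflt g0 [pick g in B | r f g].
have hP f : f \in A -> h f \in B /\ r f (h f).
  move=> fA; rewrite /h; case: pickP => [g /andP[]//|H] /=.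
  by have [g gB rg] := ex f fA; have := H g; rewrite gB rg.
rewrite -(card_in_imset (f:=h)); last first.
  move=> f f' fA f'A e; have [h1 r1] := hP f fA; have [h2 r2] := hP f' f'A.
  by apply: (inj f f' (h f)) => //; rewrite e.
by apply: subset_leq_card; apply/subsetP => _ /imsetP[f fA ->]; case: (hP f fA).
Qed.

Section H.
Variable V : finType.
Implicit Types (E M : {set {set V}}) (C : {set V}).

Lemma matchingP E M : reflect (is_matching E M) (is_matchingb E M).
Proof.
apply: (iffP andP) => [[sME /forall_inP H]|[sME H]]; split => //.
  move=> e1 e2 h1 h2 ne; have /forall_inP := H _ h1; move/(_ _ h2)/implyP; exact.
apply/forall_inP => e1 h1; apply/forall_inP => e2 h2; apply/implyP; exact: H.
Qed.

Lemma pair_eq (f : {set V}) a b : #|f| = 2 -> a \in f -> b \in f -> a != b ->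
  f = [set a; b].
Proof.
move=> cf af bf ab; apply/esym/eqP; rewrite eqEcard cards2 ab cf leqnn andbT.
by apply/subsetP => x; rewrite !inE => /orP[]/eqP->.
Qed.

Lemma notdisj (A B : {set V}) : ~~ [disjoint A & B] -> exists2 x, x \in A & x \in B.
Proof. by move/pred0Pn => [x /andP[]]; exists x. Qed.

Lemma disjE (A B : {set V}) x : [disjoint A & B] -> x \in A -> x \in B -> False.
Proof. by rewrite disjoint_subset => /subsetP H xA xB; have := H x xA; rewrite inE xB. Qed.

Lemma matching_le_C E C M : is_vertex_cover E C -> is_matching E M -> #|M| <= #|C|.
Proof.
move=> cov [sME dis].
apply: (@card_rel _ _ M C (fun (g : {set V}) (w : V) => w \in g)).
  by move=> g gM; have [x xg xC] := cov g (subsetP sME _ gM); exists x.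
move=> g g' w gM g'M _ wg wg'; apply/eqP; apply: contraT => ne.
by case: (disjE (dis _ _ gM g'M ne) wg wg').
Qed.

Lemma other_notC C (f : {set V}) v w : #|f| = 2 -> v \in f -> w \in f -> v != w ->
  v \in C -> ~~ (f \subset C) -> w \notin C.
Proof.
move=> cf vf wf vw vC; apply: contra => wC; rewrite (pair_eq cf vf wf vw).
by apply/subsetP => x; rewrite !inE => /orP[]/eqP->.
Qed.

Lemma exch E C E' : is_graph E -> is_vertex_cover E C -> is_core_subgraph E C E' ->
 forall n M, #|M :\: E'| <= n -> is_matching E M ->
 exists M2, is_matching E' M2 /\ #|M2| = #|M|.
Proof.
move=> gr cov [sE' inC _ cnt]; elim=> [|n IH] M.
  rewrite leqn0 cards_eq0 setD_eq0 => sM [_ dis]; by exists M.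
move=> hn mM; case: (set_0Vmem (M :\: E')) => [M0|[e]].
  exists M; split => //; case: mM => _ dis; split => //.
  by rewrite -setD_eq0 M0.
rewrite inE => /andP[eE' eM].
have [sME dis] := mM.
have eE := subsetP sME _ eM.
have [v ve vC] := cov e eE.
have nsub : ~~ (e \subset C) by apply: contra eE' => /(inC _ eE).
have eO : e \in out_edges E C v by rewrite inE eE ve nsub.
have sO : out_edges E' C v \subset out_edges E C v.
  by apply/subsetP => f; rewrite !inE => /andP[/(subsetP sE') -> ->].
have ltO : #|out_edges E' C v| < #|out_edges E C v|.
  apply: proper_card; rewrite properEneq sO andbT; apply/eqP => h.
  by move: eO; rewrite -h inE (negbTE eE').
have cO : #|out_edges E' C v| = #|C|.+1.
  have := cnt v vC; rewrite /minn; case: ltnP => // _ h.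
  by rewrite h ltnn in ltO.
case: (boolP [exists f in out_edges E' C v, [forall g in M :\ e, [disjoint f & g]]]).
  move=> /exists_inP[f fO /forall_inP fd].
  have /andP[fE' /andP[vf _]] : (f \in E') && ((v \in f) && ~~ (f \subset C)).
    by move: fO; rewrite inE.
  have fnotin : f \notin M :\ e.
    by apply/negP => /fd H; case: (disjE H vf vf).
  pose M2 := f |: (M :\ e).
  have mM2 : is_matching E M2.
    split.
      apply/subsetP => g; rewrite !inE => /orP[/eqP->|/andP[_ gM]].
        exact: subsetP sE' _ fE'.
      exact: subsetP sME _ gM.
    move=> g1 g2; rewrite !inE => /orP[/eqP->|/andP[n1 g1M]] /orP[/eqP->|/andP[n2 g2M]] ne.
    - by rewrite eqxx in ne.
    - by apply: fd; rewrite !inE n2 g2M.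
    - by rewrite disjoint_sym; apply: fd; rewrite !inE n1 g1M.
    - exact: dis.
  have card2 : #|M2| = #|M| by rewrite cardsU1 fnotin (cardsD1 e M) eM.
  have pr : M2 :\: E' \proper M :\: E'.
    rewrite properE; apply/andP; split.
      apply/subsetP => g; rewrite !inE => /andP[gE' /orP[/eqP gf|/andP[_ gM]]]; last by rewrite gE' gM.
      by rewrite gf fE' in gE'.
    apply/subsetPn; exists e; first by rewrite inE eE' eM.
    rewrite !inE eE' eqxx /= orbF; apply/eqP => ef.
    by rewrite ef fE' in eE'.
  have := proper_card pr => hlt.
  have [M3 [mM3 c3]] := IH M2 (leq_trans (ltnSn _) (leq_trans hlt hn)) mM2.
  by exists M3; rewrite c3.
move/exists_inPn => H.
have le1 : #|out_edges E' C v| <= #|M :\ e|.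
  apply: (@card_rel _ _ (out_edges E' C v) (M :\ e) (fun (f g : {set V}) => ~~ [disjoint f & g])).
    by move=> f fO; have /forall_inPn[g gB ng] := H f fO; exists g.
  move=> f f' g fO f'O; rewrite !inE => /andP[ge gM] /notdisj[w wf wg] /notdisj[w' wf' wg'].
  have vg : v \notin g.
    by apply/negP => vg; case: (disjE (dis _ _ gM eM ge) vg ve).
  have vw : v != w by apply: contraNneq vg => ->.
  have vw' : v != w' by apply: contraNneq vg => ->.
  move: fO f'O; rewrite !inE => /andP[fE' /andP[vf nf]] /andP[f'E' /andP[vf' nf']].
  have cf := gr _ (subsetP sE' _ fE'); have cf' := gr _ (subsetP sE' _ f'E').
  have wC := other_notC cf vf wf vw vC nf.
  have w'C := other_notC cf' vf' wf' vw' vC nf'.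
  case: (eqVneq w w') => [ew|nw].
    by rewrite (pair_eq cf vf wf vw) (pair_eq cf' vf' wf' vw') ew.
  have gE := subsetP sME _ gM.
  have [x xg xC] := cov g gE.
  move: xg; rewrite (pair_eq (gr _ gE) wg wg' nw) !inE => /orP[]/eqP ex.
    by rewrite ex (negbTE wC) in xC.
  by rewrite ex (negbTE w'C) in xC.
have := matching_le_C cov mM; rewrite (cardsD1 e M) eM cO in le1 *.
move: le1; rewrite add1n; lia.
Qed.
End H.

Local Open Scope ring_scope.

Theorem lemma4 (R : realFieldType) (eps : R) (V : finType)
    (E : {set {set V}}) (C : {set V}) (E' M' : {set {set V}}) :
  0 < eps ->
  is_graph E ->
  is_vertex_cover E C ->
  is_core_subgraph E C E' ->
  is_approx_mcm eps E' M' ->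
  is_approx_mcm eps E M'.
Proof.
move=> eps0 gr cov core [mM' hle].
have sE' : E' \subset E by case: core.
split.
  by case: mM' => s d; split => //; exact: subset_trans s sE'.
have le : (mcm_size E <= mcm_size E')%N.
  apply/bigmax_leqP => M /matchingP mM.
  have [M2 [mM2 c]] := exch gr cov core (leqnn _) mM.
  by rewrite -c; apply: leq_bigmax_cond; apply/matchingP.
apply: le_trans hle; apply: ler_wpM2r; last by rewrite ler_nat.
rewrite invr_ge0; apply: addr_ge0 => //; exact: ltW.
Qed.
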